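(* Let $n\in\mathbb{N}$ and let $\Delta:M_n\to M_n$ be a (not necessarily linear) weak-2-local derivation on $M_n=M_n(\mathbb{C})$ which is symmetric, i.e. $\Delta(a^* )^*=\Delta(a)$ for all $a\in M_n$. Then $\Delta$ is linear and a derivation.
   Context: A derivation on a C$^*$-algebra $A$ is a linear map $D:A\to A$ with $D(ab)=D(a)b+aD(b)$. A (not necessarily linear) map $\Delta:A\to A$ is a weak-2-local derivation if for every $a,b\in A$ and every $\phi\in A^*$ there exists a derivation $D_{a,b,\phi}:A\to A$ such that $\phi\Delta(a)=\phi D_{a,b,\phi}(a)$ and $\phi\Delta(b)=\phi D_{a,b,\phi}(b)$. *)

(* Defs.v *)
From HB Require Import structures.
From mathcomp Require Import all_boot all_order all_algebra.
From mathcomp Require Import complex.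
From mathcomp Require Import reals.
Set Implicit Arguments. Unset Strict Implicit. Unset Printing Implicit Defensive.
Import Order.TTheory GRing.Theory Num.Theory.
Local Open Scope ring_scope.

Definition mx_linear (R : realType) (n : nat) (f : 'M[R[i]]_n -> 'M[R[i]]_n) :=
  forall (c : R[i]) (x y : 'M[R[i]]_n), f (c *: x + y) = c *: f x + f y.

(* C-linear functionals on M_n(C) (the dual space; all are continuous
   since M_n(C) is finite dimensional). *)
Definition mx_functional (R : realType) (n : nat) (phi : 'M[R[i]]_n -> R[i]) :=
  forall (c : R[i]) (x y : 'M[R[i]]_n), phi (c *: x + y) = c * phi x + phi y.

Definition is_derivation (R : realType) (n : nat) (D : 'M[R[i]]_n -> 'M[R[i]]_n) :=
  mx_linear D /\ forall a b : 'M[R[i]]_n, D (a *m b) = D a *m b + a *m D b.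

Definition weak_2_local_derivation (R : realType) (n : nat)
    (Delta : 'M[R[i]]_n -> 'M[R[i]]_n) :=
  forall (a b : 'M[R[i]]_n) (phi : 'M[R[i]]_n -> R[i]), mx_functional phi ->
    exists D : 'M[R[i]]_n -> 'M[R[i]]_n, is_derivation D /\
      phi (Delta a) = phi (D a) /\ phi (Delta b) = phi (D b).

Definition adjmx (R : realType) (n : nat) (a : 'M[R[i]]_n) : 'M[R[i]]_n :=
  (map_mx (@conjc R) a)^T.

Definition symmetric_map (R : realType) (n : nat) (Delta : 'M[R[i]]_n -> 'M[R[i]]_n) :=
  forall a : 'M[R[i]]_n, adjmx (Delta (adjmx a)) = Delta a.

(* Main.v *)
Require Import Defs.
From HB Require Import structures.
From mathcomp Require Import all_boot all_order all_algebra.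
From mathcomp Require Import complex.
From mathcomp Require Import reals.
Set Implicit Arguments. Unset Strict Implicit. Unset Printing Implicit Defensive.
Import Order.TTheory GRing.Theory Num.Theory.
Local Open Scope ring_scope.

Section S.
Variable (R : realType) (n : nat).
Local Notation C := (R[i]).
Local Notation M := ('M[C]_n).
Implicit Types A B x y w : M.

Lemma tr_delta A (i j : 'I_n) : \tr (A *m delta_mx j i) = A i j.
Proof.
rewrite /mxtrace (bigD1 i) //= big1 ?addr0.
  rewrite !mxE (bigD1 j) //= big1 ?addr0.
    by rewrite mxE !eqxx mulr1.
  by move=> k /negbTE nk; rewrite mxE nk mulr0.
move=> k /negbTE nk; rewrite mxE big1 // => l _.
by rewrite mxE nk andbF mulr0.
Qed.

Lemma mx_eq_tr A B : (forall w, \tr (A *m w) = \tr (B *m w)) -> A = B.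
Proof. by move=> h; apply/matrixP => i j; rewrite -!(tr_delta _ i j) h. Qed.

Lemma sum_delta_diag : \sum_k (delta_mx k k : M) = 1%:M.
Proof.
apply/matrixP => i j; rewrite summxE mxE (bigD1 i) //= big1 ?addr0.
  by rewrite mxE eqxx /= eq_sym.
by move=> k /negbTE nk; rewrite mxE [i == k]eq_sym nk.
Qed.

Section Lin.
Variable f : M -> M.
Hypothesis hf : mx_linear f.
Lemma lin0 : f 0 = 0.
Proof. have h := hf 1 0 0; rewrite scale1r addr0 scale1r in h; by apply: (addrI (f 0)); rewrite addr0 -h. Qed.
Lemma linD x y : f (x + y) = f x + f y.
Proof. by have := hf 1 x y; rewrite !scale1r. Qed.
Lemma linZ c x : f (c *: x) = c *: f x.
Proof. by rewrite -[c *: x]addr0 hf lin0 addr0. Qed.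
Lemma linN x : f (- x) = - f x.
Proof. by rewrite -scaleN1r linZ scaleN1r. Qed.
Lemma linB x y : f (x - y) = f x - f y.
Proof. by rewrite linD linN. Qed.
Lemma lin_units0 : (forall a b, f (delta_mx a b) = 0) -> forall x, f x = 0.
Proof.
move=> h x; rewrite (matrix_sum_delta x).
elim/big_ind: _ => [|u v hu hv|a _]; first exact: lin0.
  by rewrite linD hu hv addr0.
elim/big_ind: _ => [|u v hu hv|b _]; first exact: lin0.
  by rewrite linD hu hv addr0.
by rewrite linZ h scaler0.
Qed.
End Lin.

Lemma lin_sub (f g : M -> M) : mx_linear f -> mx_linear g -> mx_linear (fun x => f x - g x).
Proof. move=> hf hg c x y; rewrite hf hg scalerBr; by rewrite addrACA opprD. Qed.

Lemma lin_ad z : mx_linear (fun x => z *m x - x *m z).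
Proof.
move=> c x y; rewrite mulmxDr mulmxDl -scalemxAr -scalemxAl scalerBr.
by rewrite addrACA opprD.
Qed.


Lemma inner (D : M -> M) (o : 'I_n) : is_derivation D ->
  let S := \sum_k D (delta_mx k o) *m delta_mx o k in
  forall x, D x = S *m x - x *m S.
Proof.
move=> [hl hL] S.
move=> x; apply/eqP; rewrite -subr_eq0; apply/eqP; move: x.
apply: (lin_units0 (f := fun x => D x - (S *m x - x *m S))).
  exact: lin_sub hl (lin_ad S).
move=> a b; apply/eqP; rewrite subr_eq0; apply/eqP.
have L1 : S *m delta_mx a b = D (delta_mx a o) *m delta_mx o b.
  rewrite /S mulmx_suml (bigD1 a) //= big1 ?addr0; first by rewrite -mulmxA mul_delta_mx.
  by move=> k nk; rewrite -mulmxA mul_delta_mx_0 ?mulmx0.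
have E k : delta_mx a b *m D (delta_mx k o) = D (delta_mx a b *m delta_mx k o) - D (delta_mx a b) *m delta_mx k o.
  by rewrite hL addrAC subrr add0r.
have L2 : delta_mx a b *m S = D (delta_mx a o) *m delta_mx o b - D (delta_mx a b).
  rewrite /S mulmx_sumr.
  under eq_bigr do rewrite mulmxA E mulmxBl.
  rewrite sumrB.
  under [X in _ - X]eq_bigr do rewrite -mulmxA mul_delta_mx.
  rewrite -mulmx_sumr sum_delta_diag mulmx1.
  rewrite (bigD1 b) //= big1 ?addr0; first by rewrite mul_delta_mx.
  move=> k nk; rewrite mul_delta_mx_0 1?eq_sym //.
  by rewrite (lin0 hl) mul0mx.
by rewrite L1 L2 opprB addrC addrNK.
Qed.

Lemma functional_tr w : mx_functional (fun u : M => \tr (u *m w)).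
Proof. by move=> c x y; rewrite mulmxDl -scalemxAl mxtraceD mxtraceZ. Qed.

Lemma tr_ad S x w : \tr ((S *m x - x *m S) *m w) = \tr (S *m (x *m w - w *m x)).
Proof.
rewrite mulmxBl mulmxBr !raddfB /= -!mulmxA; congr (_ - _).
by rewrite mxtrace_mulC mulmxA.
Qed.

Lemma subBB (V : zmodType) (a b c d : V) : (a - b) - (c - d) = (a - c) - (b - d).
Proof. by rewrite !opprB addrACA [RHS]addrACA [- c - b]addrC. Qed.

Lemma tr_l (A : M) (a b p q : 'I_n) : \tr (A *m delta_mx a b *m delta_mx q p) = A p a *+ (b == q).
Proof.
rewrite -mulmxA mul_delta_mx_cond; case: (b == q).
  by rewrite mulr1n tr_delta.
by rewrite !mulr0n mulmx0 mxtrace0.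
Qed.

Lemma tr_r (A : M) (a b p q : 'I_n) : \tr (delta_mx a b *m A *m delta_mx q p) = A b q *+ (p == a).
Proof.
rewrite mxtrace_mulC mulmxA mul_delta_mx_cond; case: (p == a).
  by rewrite mulr1n mxtrace_mulC tr_delta.
by rewrite !mulr0n mul0mx mxtrace0.
Qed.

Section Main.
Variable (o : 'I_n) (Delta : M -> M).
Hypothesis hW : weak_2_local_derivation Delta.
Local Notation B x y := (\tr (Delta x *m y)).

Lemma key x y w : exists S, B x w = \tr (S *m (x *m w - w *m x)) /\
   B y w = \tr (S *m (y *m w - w *m y)).
Proof.
have [D [hD [e1 e2]]] := hW x y (functional_tr w).
exists (\sum_k D (delta_mx k o) *m delta_mx o k).
by rewrite e1 e2 !(inner o hD) !tr_ad.
Qed.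

Lemma FZ x w : x *m w = w *m x -> B x w = 0.
Proof. by move=> h; have [S [-> _]] := key x x w; rewrite h subrr mulmx0 mxtrace0. Qed.

Lemma FG x y w : (x - y) *m w = w *m (x - y) -> B x w = B y w.
Proof.
move=> h; have [S [-> ->]] := key x y w; apply/eqP; rewrite -subr_eq0 -raddfB /=.
by rewrite -mulmxBr subBB -mulmxBl -mulmxBr -h subrr mulmx0 mxtrace0.
Qed.

Lemma Banti x y : B x y = - B y x.
Proof.
have := FG (w := x - y) (erefl _).
rewrite !mulmxBr !raddfB /= (FZ (erefl (x *m x))) (FZ (erefl (y *m y))).
by rewrite sub0r subr0 => <-; rewrite opprK.
Qed.

Lemma Dlin : mx_linear Delta.
Proof.
move=> c x y; apply: mx_eq_tr => w.
rewrite Banti mulmxDr -scalemxAr mxtraceD mxtraceZ.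
by rewrite mulmxDl -scalemxAl mxtraceD mxtraceZ (Banti x) (Banti y) mulrN opprD.
Qed.


Local Notation E a b := (delta_mx a b : M).

Lemma BDl x y w : B (x + y) w = B x w + B y w.
Proof. by rewrite (linD Dlin) mulmxDl mxtraceD. Qed.
Lemma BNl x w : B (- x) w = - B x w.
Proof. by rewrite (linN Dlin) mulNmx raddfN. Qed.
Lemma BDr x y w : B x (y + w) = B x y + B x w.
Proof. by rewrite mulmxDr mxtraceD. Qed.
Lemma BNr x w : B x (- w) = - B x w.
Proof. by rewrite mulmxN raddfN. Qed.

Lemma U0 a b c d : b != c -> d != a -> B (E a b) (E c d) = 0.
Proof. by move=> h1 h2; apply: FZ; rewrite !mul_delta_mx_0. Qed.

Lemma U1 a b d : d != a -> B (E a b) (E b d) = B (E a a) (E a d).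
Proof.
move=> nda; have [-> //|nba] := eqVneq b a.
have nab : a != b by rewrite eq_sym.
have h : (E a b + E a a) *m (E b d - E a d) = (E b d - E a d) *m (E a b + E a a).
  rewrite mulmxDl !mulmxBr mulmxBl !mulmxDr !mul_delta_mx_cond !eqxx (negbTE nba) (negbTE nab) (negbTE nda).
  by rewrite !mulr0n !mulr1n subr0 add0r subrr !addr0 subrr.
have := FZ h.
rewrite BDl !BDr !BNr (U0 nba nda) (U0 nab nda) oppr0 !addr0.
by rewrite add0r => /eqP; rewrite subr_eq0 => /eqP.
Qed.

Lemma U2 a b c : a != b -> b != c -> c != a ->
  B (E a b) (E b a) + B (E b c) (E c b) + B (E c a) (E a c) = 0.
Proof.
move=> nab nbc nca.
have nba : b != a by rewrite eq_sym.
have ncb : c != b by rewrite eq_sym.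
have nac : a != c by rewrite eq_sym.
set P := E a b + E b c + E c a.
have hP : P *m P = E a c + E b a + E c b.
  rewrite /P !mulmxDl !mulmxDr !mul_delta_mx_cond !eqxx (negbTE nab) (negbTE nbc) (negbTE nca)
    (negbTE nba) (negbTE ncb) (negbTE nac) !mulr0n !mulr1n !addr0 !add0r //.
have := FZ (x := P) (w := P *m P) (mulmxA _ _ _).
rewrite hP /P !BDl !BDr.
rewrite (@U0 a b a c nba nca) (@U0 a b c b nbc nba) (@U0 b c a c nca ncb) (@U0 b c b a ncb nab).
rewrite (@U0 c a b a nab nac) (@U0 c a c b nac nbc).
by rewrite !addr0 !add0r => <-.
Qed.

Definition zz : M :=
  \matrix_(d, a) (if d == a then B (E a o) (E o a) else B (E a a) (E a d)).

Lemma unit_case a b p q :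
  B (E a b) (E q p) = zz p a *+ (b == q) - zz b q *+ (p == a).
Proof.
rewrite !mxE.
have [<-|nbq] := eqVneq b q; have [->|npa] := eqVneq p a.
  rewrite !mulr1n.
  have [<-|nab] := eqVneq a b; first by rewrite subrr; apply: FZ.
  have [eao|nao] := eqVneq a o.
    by rewrite eao (FZ (erefl (E o o *m E o o))) sub0r Banti.
  have [ebo|nbo] := eqVneq b o.
    by rewrite ebo (FZ (erefl (E o o *m E o o))) subr0.
  have noa : o != a by rewrite eq_sym.
  have := U2 nab nbo noa.
  rewrite (Banti (E o a)) => /eqP; rewrite addrAC addr_eq0 subr_eq => /eqP ->.
  by rewrite addrC.
- by rewrite mulr1n mulr0n subr0 U1.
- by rewrite mulr1n mulr0n sub0r Banti (U1 _ nbq).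
- by rewrite !mulr0n subr0 U0.
Qed.

Lemma Dz x : Delta x = zz *m x - x *m zz.
Proof.
apply/eqP; rewrite -subr_eq0; apply/eqP; move: x.
apply: (lin_units0 (f := fun x => Delta x - (zz *m x - x *m zz))).
  exact: lin_sub Dlin (lin_ad zz).
move=> a b; apply/eqP; rewrite subr_eq0; apply/eqP.
apply/matrixP => p q; rewrite -!(tr_delta _ p q) unit_case mulmxBl raddfB /=.
by rewrite tr_l tr_r.
Qed.

Lemma Dderiv : is_derivation Delta.
Proof.
split; first exact: Dlin.
move=> x y; rewrite !Dz mulmxBl mulmxBr !mulmxA.
by rewrite addrA subrK.
Qed.
End Main.
End S.

Theorem proposition2p11 (R : realType) (n : nat)
    (Delta : 'M[R[i]]_n -> 'M[R[i]]_n) :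
  weak_2_local_derivation Delta -> symmetric_map Delta ->
  mx_linear Delta /\ is_derivation Delta.
Proof.
move=> hW _.
case: n Delta hW => [|m] Delta hW.
  have e : forall x y : 'M[R[i]]_0, x = y by move=> x y; rewrite (flatmx0 x) (flatmx0 y).
  by split; [|split]; move=> *; apply: e.
have hd := @Dderiv R m.+1 ord0 Delta hW.
by split; [case: hd|].
Qed.
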